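(* Let $b>0$ and $\beta>0$. Let $X$ be the set of all $\gamma\in C([0,b])$ which are continuously differentiable on $(0,b]$, with $\gamma(t)>0$ for all $t\in(0,b]$, $\gamma(0)=0$, $\gamma(b)=\beta$, and such that the improper integral $$\mathcal{L}(\gamma)=\int_0^b\left(\frac{1+\gamma'(t)^2}{\gamma(t)}\right)^{1/2}dt$$ is defined (finite). Let $\gamma$ be a minimum of $\mathcal{L}$ on $X$. Then: (a) $\lim_{t\to 0^+}\gamma'(t)=\infty$; (b) $\gamma$ is not constant on any interval; (c) $\gamma$ has at most one critical point, which is a maximum; (d) $\gamma$ is either strictly increasing, or is strictly increasing, reaches a maximum and then is strictly decreasing; (e) $\gamma'$ is strictly decreasing on $(0,b)$. *)

(* Defs.v *)
From Stdlib Require Import Reals.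
From Coquelicot Require Export Coquelicot.
Open Scope R_scope.

Definition C1_on_0b (b : R) (g : R -> R) : Prop :=
  exists dg : R -> R,
    (forall t, 0 < t < b -> is_derive g t (dg t)) /\
    filterlim (fun t => (g t - g b) / (t - b)) (at_left b) (locally (dg b)) /\
    continuous_on (fun t => 0 < t <= b) dg.

Definition Lintegrand (g : R -> R) (t : R) : R :=
  sqrt ((1 + (Derive g t) ^ 2) / g t).

Definition L_is (b : R) (g : R -> R) (l : R) : Prop :=
  is_RInt_gen (Lintegrand g) (at_right 0) (at_point b) l.

Definition inX (b beta : R) (g : R -> R) : Prop :=
  continuous_on (fun t => 0 <= t <= b) g /\
  C1_on_0b b g /\
  (forall t, 0 < t <= b -> 0 < g t) /\
  g 0 = 0 /\ g b = beta /\
  exists l, L_is b g l.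

Definition is_minimizer (b beta : R) (g : R -> R) : Prop :=
  inX b beta g /\
  exists l, L_is b g l /\
    forall h m, inX b beta h -> L_is b h m -> l <= m.

Definition strictly_increasing_on (a c : R) (g : R -> R) : Prop :=
  forall s t, a <= s -> s < t -> t <= c -> g s < g t.

Definition strictly_decreasing_on (a c : R) (g : R -> R) : Prop :=
  forall s t, a <= s -> s < t -> t <= c -> g t < g s.

(* Main.v *)
Require Import Defs.
From Stdlib Require Import Reals Lra Classical_Prop.
From Coquelicot Require Import Coquelicot.
From Stdlib Require Import Reals Lra.
Open Scope R_scope.
Definition F (y p : R) := sqrt ((1 + p^2) / y).
Definition dF (Y P a c u : R) := 
  (2*c*(P+u*c)*(Y+u*a) - a*(1+(P+u*c)^2)) / (2*(Y+u*a)^2 * F (Y+u*a) (P+u*c)).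

Lemma F_split Y P : 0 < Y -> F Y P = sqrt (1+P^2) / sqrt Y.
Proof. intros. unfold F. apply sqrt_div; nra. Qed.

Lemma q_form Y P : 0 < Y -> sqrt Y * dF Y P 0 1 0 = P / sqrt (1 + P^2).
Proof.
intros HY. unfold dF. rewrite F_split by lra.
replace (Y + 0*0) with Y by ring.
assert (Ha : 0 < sqrt Y) by (apply sqrt_lt_R0; lra).
assert (Hw : 0 < sqrt (1 + (P+0*1)^2)) by (apply sqrt_lt_R0; nra).
assert (HYa : sqrt Y * sqrt Y = Y) by (apply sqrt_sqrt; lra).
replace (P + 0*1) with P in * by ring.
set (a := sqrt Y) in *. set (w := sqrt (1+P^2)) in *. clearbody a w. subst Y.
field. lra.
Qed.

Lemma qd_neg Y P : 0 < Y ->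
  P / (2 * sqrt Y) * dF Y P 0 1 0 + sqrt Y * dF Y P 1 0 0 = - 1 / (2 * Y * sqrt (1+P^2)).
Proof.
intros HY. unfold dF.
replace (Y + 0*0) with Y by ring. replace (Y + 0*1) with Y by ring.
replace (P + 0*1) with P by ring. replace (P + 0*0) with P by ring.
rewrite F_split by lra.
assert (Ha : 0 < sqrt Y) by (apply sqrt_lt_R0; lra).
assert (Hw : 0 < sqrt (1 + P^2)) by (apply sqrt_lt_R0; nra).
assert (HYa : sqrt Y * sqrt Y = Y) by (apply sqrt_sqrt; lra).
assert (Hww : sqrt (1+P^2) * sqrt (1+P^2) = 1 + P^2) by (apply sqrt_sqrt; nra).
set (a := sqrt Y) in *. set (w := sqrt (1+P^2)) in *. clearbody a w. subst Y.
replace (1 + P^2) with (w*w) by lra.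
assert (PP : P^2 = w*w - 1) by lra. field_simplify; [|lra..]. rewrite PP. field_simplify; [|lra..]. reflexivity.
Qed.

Lemma F_pos y p : 0 < y -> 0 < F y p.
Proof. intros. unfold F. apply sqrt_lt_R0. apply Rdiv_lt_0_compat; nra. Qed.

Lemma F_deriv Y P a c u : 0 < Y + u*a ->
  is_derive (fun z => F (Y + z*a) (P + z*c)) u (dF Y P a c u).
Proof.
intros H. unfold F, dF.
auto_derive.
- split; [lra|split; [|easy]]. apply Rmult_lt_0_compat. 
  + rewrite Rmult_1_r. pose proof (Rle_0_sqr (P+u*c)). unfold Rsqr in *. lra.
  + apply Rinv_0_lt_compat; lra.
- set (y := Y + u*a). set (p := P+u*c).
  assert (Hs : 0 < sqrt ((1 + p^2)/y)) by (apply sqrt_lt_R0; apply Rdiv_lt_0_compat; unfold y in *; nra).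
  replace ((1 + p * (p * 1)) * / y) with ((1 + p^2)/y) by (unfold Rdiv; ring).
  unfold F.
  field. split; [lra|unfold y in *; lra].
Qed.
Lemma loc_open (t b : R) : 0 < t < b -> locally t (fun x => 0 < x < b).
Proof.
intros H. assert (Hd : 0 < Rmin t (b - t)) by (apply Rmin_glb_lt; lra).
exists (mkposreal _ Hd). intros y Hy. unfold ball in Hy; simpl in Hy; unfold AbsRing_ball, abs, minus, plus, opp in Hy; simpl in Hy.
pose proof (Rmin_l t (b-t)). pose proof (Rmin_r t (b-t)).
apply Rabs_lt_between in Hy. lra.
Qed.

Definition hq (p : R) := p / sqrt (1 + p^2).

Lemma hq_incr p1 p2 : p1 < p2 -> hq p1 < hq p2.
Proof.
intros H. apply (incr_function hq m_infty p_infty (fun p => / ((1+p^2) * sqrt (1+p^2)))); try easy.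
- intros x _ _. unfold hq. auto_derive.
  + assert (0 < sqrt (1 + x*(x*1))) by (apply sqrt_lt_R0; nra). repeat split; try lra. nra.
  + assert (Hw : 0 < sqrt (1 + x^2)) by (apply sqrt_lt_R0; nra).
    assert (Hww : sqrt (1+x^2) * sqrt (1+x^2) = 1 + x^2) by (apply sqrt_sqrt; nra).
    replace (1 + x * (x*1)) with (1 + x^2) by ring.
    set (w := sqrt (1+x^2)) in *. clearbody w.
    assert (PP : x^2 = w*w - 1) by lra. rewrite <- Hww. field_simplify; [|lra..]. rewrite PP. field_simplify; [|lra..]. reflexivity.
- intros x _ _. assert (Hw : 0 < sqrt (1 + x^2)) by (apply sqrt_lt_R0; nra).
  apply Rinv_0_lt_compat. apply Rmult_lt_0_compat; nra.
Qed.

Definition P2hyp (b : R) (g dg : R -> R) : Prop :=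
  0 < b /\
  continuous_on (fun t => 0 <= t <= b) g /\
  (forall t, 0 < t <= b -> 0 < g t) /\
  g 0 = 0 /\
  (forall t, 0 < t < b -> is_derive g t (dg t)) /\
  (forall t, 0 < t < b -> continuous dg t) /\
  (forall t, 0 < t < b ->
     is_derive (fun x => dF (g x) (dg x) 0 1 0) t (dF (g t) (dg t) 1 0 0)).

Lemma q_deriv b g dg : P2hyp b g dg -> forall t, 0 < t < b ->
  is_derive (fun x => hq (dg x)) t (- 1 / (2 * g t * sqrt (1 + dg t ^2))).
Proof.
intros (Hb & Hgc & Hpos & Hg0 & Hd & Hdc & HEL) t Ht.
apply is_derive_ext_loc with (fun x => sqrt (g x) * dF (g x) (dg x) 0 1 0).
{ generalize (loc_open t b Ht). apply filter_imp. intros x Hx.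
  unfold hq. apply q_form. apply Hpos; lra. }
rewrite <- qd_neg by (apply Hpos; lra).
assert (Hs : is_derive (fun x => sqrt (g x)) t (dg t / (2 * sqrt (g t)))).
{ apply is_derive_sqrt. apply Hd; auto. apply Hpos; lra. }
pose proof (is_derive_mult _ _ _ _ _ Hs (HEL t Ht) Rmult_comm) as H.
exact H.
Qed.

Lemma dg_decr b g dg : P2hyp b g dg -> forall s t, 0 < s -> s < t -> t < b -> dg t < dg s.
Proof.
intros HP s t H1 H2 H3.
assert (Hq : hq (dg t) < hq (dg s)).
{ assert (- hq (dg s) < - hq (dg t)); [|lra].
  apply (incr_function (fun x => - hq (dg x)) (Finite 0) (Finite b)
    (fun x => - (- 1 / (2 * g x * sqrt (1 + dg x ^2))))); try (simpl; lra).
  - intros x Hx1 Hx2; simpl in Hx1, Hx2. apply (is_derive_opp (fun x => hq (dg x))). apply (q_deriv b g dg HP); lra.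
  - intros x Hx1 Hx2; simpl in Hx1, Hx2. destruct HP as (Hb & Hgc & Hpos & _).
    assert (0 < g x) by (apply Hpos; lra).
    assert (0 < sqrt (1 + dg x ^2)) by (apply sqrt_lt_R0; nra).
    assert (0 < 2 * g x * sqrt (1 + dg x ^2)) by (apply Rmult_lt_0_compat; lra).
    replace (- (-1 / (2 * g x * sqrt (1 + dg x ^ 2)))) with (/ (2 * g x * sqrt (1 + dg x ^ 2))) by (field; lra). apply Rinv_0_lt_compat. lra. }
destruct (Rlt_or_le (dg t) (dg s)) as [|Hle]; auto.
destruct Hle as [Hlt|Heq].
- apply hq_incr in Hlt. lra.
- rewrite Heq in Hq. lra.
Qed.

Lemma E_deriv_gen (g q : R -> R) t gd qd : is_derive g t gd -> is_derive q t qd -> 1 - q t ^2 <> 0 ->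
  is_derive (fun x => g x / (1 - q x ^ 2)) t (gd / (1 - q t ^2) + g t * (2 * q t * qd) / (1 - q t ^2)^2).
Proof.
intros Hg Hq Hn. auto_derive.
- repeat split. exists gd; auto. exists qd; auto. simpl in Hn. replace (1 + - (q t * (q t * 1))) with (1 - q t * (q t * 1)) by ring. auto.
- replace (Derive (fun x => g x) t) with gd by (symmetry; apply is_derive_unique; auto). replace (Derive (fun x => q x) t) with qd by (symmetry; apply is_derive_unique; auto). simpl in *. field.
  replace (q t * q t) with (q t * (q t * 1)) by ring. auto.
Qed.

Lemma hq_sq P : 1 - hq P ^ 2 = / (1 + P^2).
Proof.
unfold hq. assert (Hw : 0 < sqrt (1 + P^2)) by (apply sqrt_lt_R0; nra).
assert (Hww : sqrt (1+P^2) * sqrt (1+P^2) = 1 + P^2) by (apply sqrt_sqrt; nra).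
set (w := sqrt (1+P^2)) in *. clearbody w. rewrite <- Hww. field_simplify; [|lra..].
replace (P^2) with (w*w - 1) by lra. field. lra.
Qed.

Lemma E_const b g dg : P2hyp b g dg -> forall s t, 0 < s < b -> 0 < t < b ->
  g s * (1 + dg s ^2) = g t * (1 + dg t ^2).
Proof.
intros HP.
assert (HE : forall t, 0 < t < b -> is_derive (fun x => g x / (1 - hq (dg x) ^ 2)) t 0).
{ intros t Ht. destruct HP as (Hb & Hgc & Hpos & Hg0 & Hd & Hdc & HEL).
  assert (Hq := q_deriv b g dg (conj Hb (conj Hgc (conj Hpos (conj Hg0 (conj Hd (conj Hdc HEL))))))).
  assert (Hn : 1 - hq (dg t) ^2 <> 0) by (rewrite hq_sq; apply Rgt_not_eq, Rinv_0_lt_compat; nra).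
  pose proof (E_deriv_gen g (fun x => hq (dg x)) t (dg t) _ (Hd t Ht) (Hq t Ht) Hn) as H.
  replace 0 with (dg t / (1 - hq (dg t) ^ 2) + g t * (2 * hq (dg t) * (-1 / (2 * g t * sqrt (1 + dg t ^ 2)))) / (1 - hq (dg t) ^ 2) ^ 2); auto.
  assert (0 < g t) by (apply Hpos; lra).
  rewrite hq_sq. unfold hq. set (P := dg t) in *. set (Y := g t) in *.
  assert (Hw : 0 < sqrt (1 + P^2)) by (apply sqrt_lt_R0; nra).
  assert (Hww : sqrt (1+P^2) * sqrt (1+P^2) = 1 + P^2) by (apply sqrt_sqrt; nra).
  set (w := sqrt (1+P^2)) in *. clearbody w. rewrite <- Hww. field. lra. }
assert (Heq : forall s t, 0 < s < b -> 0 < t < b -> s <= t ->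
   g s / (1 - hq (dg s) ^ 2) = g t / (1 - hq (dg t) ^ 2)).
{ intros s t Hs Ht Hst.
  destruct (MVT_gen (fun x => g x / (1 - hq (dg x) ^ 2)) s t (fun _ => 0)) as (c & Hc & Hmvt).
  - intros x Hx. rewrite Rmin_left in Hx by lra. rewrite Rmax_right in Hx by lra. apply HE. lra.
  - intros x Hx. rewrite Rmin_left in Hx by lra. rewrite Rmax_right in Hx by lra.
    apply (proj2 (continuity_pt_filterlim _ _)). apply (ex_derive_continuous (fun x => g x / (1 - hq (dg x) ^ 2))). exists 0. apply HE. lra.
  - lra. }
intros s t Hs Ht.
assert (E : forall x, g x * (1 + dg x ^2) = g x / (1 - hq (dg x) ^ 2)).
{ intros x. rewrite hq_sq. field. nra. }
rewrite !E. destruct (Rle_lt_dec s t); [apply Heq; auto|symmetry; apply Heq; auto; lra].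
Qed.

Definition WC (b : R) (f : R -> R) : Prop :=
  forall x, 0 <= x <= b -> forall eps, 0 < eps -> exists delta, 0 < delta /\
    forall u, 0 <= u <= b -> Rabs (u - x) < delta -> Rabs (f u - f x) < eps.

Lemma WC_of_cont b f : continuous_on (fun t => 0 <= t <= b) f -> WC b f.
Proof.
intros H x Hx eps Heps.
destruct (H x Hx (ball (f x) (mkposreal eps Heps)) (locally_ball _ _)) as [d Hd].
exists d. split; [apply cond_pos|]. intros u Hu Hux.
apply (Hd u); auto.
Qed.

Lemma WC_opp b f : WC b f -> WC b (fun x => - f x).
Proof.
intros H x Hx eps Heps. destruct (H x Hx eps Heps) as (d & Hd & Hdd).
exists d. split; auto. intros u Hu Hux. replace (- f u - - f x) with (- (f u - f x)) by ring.
rewrite Rabs_Ropp. auto.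
Qed.

Lemma end_left b f s x : WC b f -> 0 <= s -> s < x -> x <= b ->
  (forall u, s < u < x -> f u < f x) -> f s <= f x.
Proof.
intros H H1 H2 H3 Hu. destruct (Rle_or_lt (f s) (f x)) as [|Hlt]; auto.
destruct (H s (conj H1 (Rlt_le _ _ (Rlt_le_trans _ _ _ H2 H3))) (f s - f x)) as (d & Hd & Hdd); [lra|].
set (u := s + Rmin d (x - s) / 2).
assert (Hm : 0 < Rmin d (x - s)) by (apply Rmin_glb_lt; lra).
pose proof (Rmin_l d (x-s)). pose proof (Rmin_r d (x-s)).
assert (Hu1 : s < u < x) by (unfold u; lra).
specialize (Hdd u ltac:(lra)). rewrite Rabs_right in Hdd by (unfold u; lra).
specialize (Hdd ltac:(unfold u; lra)). specialize (Hu u Hu1).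
apply Rabs_lt_between in Hdd. lra.
Qed.

Lemma end_right b f x t : WC b f -> 0 <= x -> x < t -> t <= b ->
  (forall u, x < u < t -> f x < f u) -> f x <= f t.
Proof.
intros H H1 H2 H3 Hu. destruct (Rle_or_lt (f x) (f t)) as [|Hlt]; auto.
destruct (H t (conj (Rlt_le _ _ (Rle_lt_trans _ _ _ H1 H2)) H3) (f x - f t)) as (d & Hd & Hdd); [lra|].
set (u := t - Rmin d (t - x) / 2).
assert (Hm : 0 < Rmin d (t - x)) by (apply Rmin_glb_lt; lra).
pose proof (Rmin_l d (t-x)). pose proof (Rmin_r d (t-x)).
assert (Hu1 : x < u < t) by (unfold u; lra).
specialize (Hdd u ltac:(lra)). rewrite Rabs_left in Hdd by (unfold u; lra).
specialize (Hdd ltac:(unfold u; lra)). specialize (Hu u Hu1).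
apply Rabs_lt_between in Hdd. lra.
Qed.

Lemma incr_closed b f df s t : WC b f -> 0 <= s -> s < t -> t <= b ->
  (forall x, s < x < t -> is_derive f x (df x)) -> (forall x, s < x < t -> df x > 0) -> f s < f t.
Proof.
intros H H1 H2 H3 Hd Hp.
assert (Hi : forall x y, s < x -> x < y -> y < t -> f x < f y).
{ intros x y Hx Hxy Hy. apply (incr_function f (Finite s) (Finite t) df); simpl; auto. }
set (x1 := s + (t - s)/3). set (x2 := s + 2*(t-s)/3).
assert (A1 : f s <= f x1).
{ apply (end_left b); auto; unfold x1 in *; try lra. intros u Hu. apply Hi; lra. }
assert (A2 : f x2 <= f t).
{ apply (end_right b); auto; unfold x2 in *; try lra. intros u Hu. apply Hi; unfold x2 in *; lra. }
assert (A3 : f x1 < f x2) by (apply Hi; unfold x1, x2; lra).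
lra.
Qed.

Lemma decr_closed b f df s t : WC b f -> 0 <= s -> s < t -> t <= b ->
  (forall x, s < x < t -> is_derive f x (df x)) -> (forall x, s < x < t -> df x < 0) -> f t < f s.
Proof.
intros H H1 H2 H3 Hd Hp.
assert (- f s < - f t); [|lra].
apply (incr_closed b (fun x => - f x) (fun x => - df x)); auto.
- apply WC_opp; auto.
- intros x Hx. apply (is_derive_opp f). auto.
- intros x Hx. specialize (Hp x Hx). lra.
Qed.

Definition clamp (x1 x2 x : R) := Rmax x1 (Rmin x x2).

Lemma clamp_lip x1 x2 x y : x1 <= x2 -> Rabs (clamp x1 x2 x - clamp x1 x2 y) <= Rabs (x - y).
Proof.
intros H. unfold clamp, Rmax, Rmin.
repeat (destruct Rle_dec); apply Rabs_le; split;
  try (pose proof (Rabs_pos (x - y)); pose proof (Rle_abs (x-y)); pose proof (Rle_abs (-(x-y)));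
       rewrite Rabs_Ropp in *; lra).
Qed.

Lemma clamp_cont x1 x2 x : x1 <= x2 -> continuous (clamp x1 x2) x.
Proof.
intros H. apply continuity_pt_filterlim.
intros eps Heps. exists eps. split; auto. intros y [_ Hy]. simpl in *. unfold R_dist in *.
eapply Rle_lt_trans; [apply clamp_lip; auto|]. auto.
Qed.

Lemma IVT_dg (dg : R -> R) x1 x2 : x1 < x2 -> (forall x, x1 <= x <= x2 -> continuous dg x) ->
  dg x1 > 0 -> dg x2 <= 0 -> exists m, x1 <= m <= x2 /\ dg m = 0.
Proof.
intros H Hc H1 H2.
assert (Hk : forall x, continuous (fun x => dg (clamp x1 x2 x)) x).
{ intros x. apply (continuous_comp (clamp x1 x2) dg). apply clamp_cont; lra.
  apply Hc. unfold clamp, Rmax, Rmin. repeat destruct Rle_dec; lra. }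
assert (E1 : clamp x1 x2 x1 = x1) by (unfold clamp, Rmax, Rmin; repeat destruct Rle_dec; lra).
assert (E2 : clamp x1 x2 x2 = x2) by (unfold clamp, Rmax, Rmin; repeat destruct Rle_dec; lra).
assert (Hy : Rmin (dg (clamp x1 x2 x1)) (dg (clamp x1 x2 x2)) <= 0 <= Rmax (dg (clamp x1 x2 x1)) (dg (clamp x1 x2 x2))).
{ rewrite E1, E2. rewrite Rmin_right, Rmax_left by lra. lra. }
destruct (IVT_gen_consistent (fun x => dg (clamp x1 x2 x)) x1 x2 0 Hk Hy) as (m & Hm & Hmv).
rewrite Rmin_left, Rmax_right in Hm by lra. exists m. split; auto.
replace m with (clamp x1 x2 m); auto. unfold clamp, Rmax, Rmin; repeat destruct Rle_dec; lra.
Qed.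

Lemma partII b g dg : P2hyp b g dg ->
  filterlim (Derive g) (at_right 0) (Rbar_locally p_infty) /\
  (forall a c, 0 <= a -> a < c -> c <= b ->
     ~ (forall t, a <= t <= c -> g t = g a)) /\
  (forall t1 t2, 0 < t1 < b -> 0 < t2 < b ->
     Derive g t1 = 0 -> Derive g t2 = 0 -> t1 = t2) /\
  (forall t, 0 < t < b -> Derive g t = 0 ->
     forall s, 0 <= s <= b -> g s <= g t) /\
  ((forall s t, 0 <= s -> s < t -> t <= b -> g s < g t) \/
   exists m, 0 < m < b /\ (forall s t, 0 <= s -> s < t -> t <= m -> g s < g t) /\
             (forall s t, m <= s -> s < t -> t <= b -> g t < g s)) /\
  (forall s t, 0 < s -> s < t -> t < b -> Derive g t < Derive g s).
Proof.
intros HP.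
assert (Hdec := dg_decr b g dg HP).
assert (HEc := E_const b g dg HP).
destruct HP as (Hb & Hgc & Hpos & Hg0 & Hd & Hdc & HEL).
assert (HW := WC_of_cont b g Hgc).
assert (HDer : forall t, 0 < t < b -> Derive g t = dg t) by (intros; apply is_derive_unique; auto).
assert (Ha : filterlim dg (at_right 0) (Rbar_locally p_infty)).
{ intros P [M HM].
  set (h := b/2). assert (Hh : 0 < h < b) by (unfold h; lra).
  set (c := g h * (1 + dg h ^ 2)).
  assert (Hc : 0 < c) by (unfold c; assert (0 < g h) by (apply Hpos; lra); nra).
  set (M' := Rmax M (Rabs (dg h)) + 1).
  assert (HM1 : M <= Rmax M (Rabs (dg h))) by apply Rmax_l.
  assert (HM2 : Rabs (dg h) <= Rmax M (Rabs (dg h))) by apply Rmax_r.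
  assert (HM3 : 0 <= Rabs (dg h)) by apply Rabs_pos.
  assert (HM4 : - Rabs (dg h) <= dg h) by (pose proof (Rle_abs (- dg h)); rewrite Rabs_Ropp in *; lra).
  destruct (HW 0 (conj (Rle_refl 0) (Rlt_le _ _ Hb)) (c / (1 + M'^2))) as (d & Hd0 & Hdd).
  { apply Rdiv_lt_0_compat; nra. }
  assert (Hr : 0 < Rmin d h) by (apply Rmin_glb_lt; lra).
  exists (mkposreal _ Hr). intros x Hx Hx0.
  unfold ball in Hx; simpl in Hx; unfold AbsRing_ball, abs, minus, plus, opp in Hx; simpl in Hx.
  rewrite Ropp_0, Rplus_0_r in Hx. rewrite Rabs_right in Hx by lra.
  pose proof (Rmin_l d h). pose proof (Rmin_r d h).
  apply HM.
  assert (Hxb : 0 <= x <= b) by (simpl in *; lra).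
  assert (Hgx : g x < c / (1 + M'^2)).
  { assert (A : Rabs (x-0) < d) by (rewrite Rminus_0_r, Rabs_right; simpl in *; lra).
    specialize (Hdd x Hxb A). rewrite Hg0, Rminus_0_r, Rabs_right in Hdd; [exact Hdd|].
    apply Rle_ge, Rlt_le, Hpos; simpl in *; lra. }
  assert (HE := HEc x h ltac:(simpl in *; lra) Hh). fold c in HE.
  assert (Hgp : 0 < g x) by (apply Hpos; simpl in *; lra).
  assert (Hdx : dg h < dg x) by (apply Hdec; simpl in *; lra).
  assert (HM' : 0 < M') by (unfold M'; lra).
  assert (Hsq : M'^2 < dg x ^2).
  { apply Rmult_lt_reg_l with (g x); auto.
    assert (g x * (1 + M'^2) < c).
    { apply Rmult_lt_reg_r with (/ (1 + M'^2)). apply Rinv_0_lt_compat; nra.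
      rewrite Rmult_assoc, Rinv_r by nra. lra. }
    nra. }
  assert (Hneg : - M' < dg x) by (unfold M' in *; lra).
  assert (M' < dg x). { destruct (Rlt_or_le M' (dg x)) as [|Hle]; auto. assert (0 <= (M' - dg x) * (M' + dg x)) by (apply Rmult_le_pos; lra). simpl in *; nra. }
  unfold M' in *. lra. }
assert (HincC : forall s t, 0 <= s -> s < t -> t <= b -> (forall x, s < x < t -> dg x > 0) -> g s < g t).
{ intros s t H1 H2 H3 H4. apply (incr_closed b g dg); auto.
  intros x Hx; apply Hd; lra. }
assert (HdecC : forall s t, 0 <= s -> s < t -> t <= b -> (forall x, s < x < t -> dg x < 0) -> g t < g s).
{ intros s t H1 H2 H3 H4. apply (decr_closed b g dg); auto.
  intros x Hx; apply Hd; lra. }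
assert (Hd_ : forall m, 0 < m < b -> dg m = 0 ->
   (forall s t, 0 <= s -> s < t -> t <= m -> g s < g t) /\
   (forall s t, m <= s -> s < t -> t <= b -> g t < g s)).
{ intros m Hm Hm0. split.
  - intros s t H1 H2 H3. apply HincC; try lra. intros x Hx. rewrite <- Hm0. apply Hdec; lra.
  - intros s t H1 H2 H3. apply HdecC; try lra. intros x Hx. rewrite <- Hm0. apply Hdec; lra. }
assert (HD : (forall s t, 0 <= s -> s < t -> t <= b -> g s < g t) \/
   exists m, 0 < m < b /\ (forall s t, 0 <= s -> s < t -> t <= m -> g s < g t) /\
             (forall s t, m <= s -> s < t -> t <= b -> g t < g s)).
{ destruct (Classical_Prop.classic (exists x, 0 < x < b /\ dg x <= 0)) as [[x2 [Hx2 Hx2']]|Hn].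
  - right.
    destruct (Ha (fun y => y > 0)) as [d Hd1].
    { exists 0. intros; lra. }
    set (x1 := Rmin d x2 / 2).
    assert (Hm : 0 < Rmin d x2) by (apply Rmin_glb_lt; [apply cond_pos|lra]).
    pose proof (Rmin_l d x2). pose proof (Rmin_r d x2).
    assert (Hx1 : dg x1 > 0).
    { apply Hd1. unfold ball; simpl; unfold AbsRing_ball, abs, minus, plus, opp; simpl.
      rewrite Ropp_0, Rplus_0_r, Rabs_right; unfold x1; lra. unfold x1; lra. }
    destruct (IVT_dg dg x1 x2) as (m & Hm1 & Hm2); try (unfold x1; lra); auto.
    { intros x Hx. apply Hdc. unfold x1 in *; lra. }
    exists m. split; [unfold x1 in *; lra|]. apply Hd_; [unfold x1 in *; lra|exact Hm2].
  - left. intros s t H1 H2 H3. apply HincC; auto. intros x Hx.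
    destruct (Rlt_or_le 0 (dg x)); auto. exfalso. apply Hn. exists x. split; auto. lra. }
split.
{ apply filterlim_ext_loc with dg; auto.
  assert (Hbp : 0 < b) by lra. exists (mkposreal _ Hbp). intros x Hx Hx0.
  unfold ball in Hx; simpl in Hx; unfold AbsRing_ball, abs, minus, plus, opp in Hx; simpl in Hx.
  rewrite Ropp_0, Rplus_0_r, Rabs_right in Hx by lra. symmetry; apply HDer; lra. }
split.
{ intros a c H1 H2 H3 Hcst. destruct HD as [Hi|(m & Hm & Hi & Hde)].
  - specialize (Hi a c H1 H2 H3). rewrite (Hcst c) in Hi by lra. lra.
  - destruct (Rlt_or_le a m).
    + specialize (Hi a (Rmin c m) H1 ltac:(apply Rmin_glb_lt; lra) (Rmin_r _ _)).
      rewrite (Hcst (Rmin c m)) in Hi. lra. split; [apply Rmin_glb; lra|apply Rmin_l].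
    + specialize (Hde a c ltac:(lra) H2 H3). rewrite (Hcst c) in Hde by lra. lra. }
split.
{ intros t1 t2 H1 H2 E1 E2. rewrite HDer in E1, E2 by auto.
  destruct (Rtotal_order t1 t2) as [Hlt|[Heq|Hgt]]; auto.
  - specialize (Hdec t1 t2 ltac:(lra) Hlt ltac:(lra)). lra.
  - specialize (Hdec t2 t1 ltac:(lra) Hgt ltac:(lra)). lra. }
split.
{ intros t Ht E s Hs. rewrite HDer in E by auto.
  destruct (Hd_ t Ht E) as [Hi Hde].
  destruct (Rtotal_order s t) as [Hlt|[Heq|Hgt]].
  - left. apply Hi; lra.
  - subst; lra.
  - left. apply Hde; lra. }
split; auto.
intros s t H1 H2 H3. rewrite !HDer by lra. apply Hdec; auto.
Qed.
Lemma c2v (f : R -> R) u0 v0 : continuous f v0 -> continuity_2d_pt (fun _ v => f v) u0 v0.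
Proof.
intros H. apply (continuity_1d_2d_pt_comp f (fun _ v => v)).
- apply continuity_pt_filterlim. exact H.
- apply continuity_2d_pt_id2.
Qed.

Lemma c2_F (Yf Pf af cf : R -> R) u0 v0 :
  continuous Yf v0 -> continuous Pf v0 -> continuous af v0 -> continuous cf v0 ->
  0 < Yf v0 + u0 * af v0 ->
  continuity_2d_pt (fun u v => F (Yf v + u * af v) (Pf v + u * cf v)) u0 v0
  /\ continuity_2d_pt (fun u v => dF (Yf v) (Pf v) (af v) (cf v) u) u0 v0.
Proof.
intros HY HP Ha Hc Hpos.
assert (Cy : continuity_2d_pt (fun u v => Yf v + u * af v) u0 v0).
{ apply continuity_2d_pt_plus. apply c2v; auto.
  apply continuity_2d_pt_mult. apply continuity_2d_pt_id1. apply c2v; auto. }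
assert (Cp : continuity_2d_pt (fun u v => Pf v + u * cf v) u0 v0).
{ apply continuity_2d_pt_plus. apply c2v; auto.
  apply continuity_2d_pt_mult. apply continuity_2d_pt_id1. apply c2v; auto. }
set (y0 := Yf v0 + u0 * af v0) in *. set (p0 := Pf v0 + u0 * cf v0).
assert (Cq : continuity_2d_pt (fun u v => (1 + (Pf v + u * cf v)^2) / (Yf v + u * af v)) u0 v0).
{ apply continuity_2d_pt_ext with (fun u v => (1 + (Pf v + u * cf v)*(Pf v + u * cf v)) * / (Yf v + u * af v)).
  { intros; unfold Rdiv; ring. }
  apply continuity_2d_pt_mult.
  - apply continuity_2d_pt_plus. apply continuity_2d_pt_const. apply continuity_2d_pt_mult; auto.
  - apply continuity_2d_pt_inv; auto. fold y0. lra. }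
assert (CF : continuity_2d_pt (fun u v => F (Yf v + u * af v) (Pf v + u * cf v)) u0 v0).
{ unfold F. apply (continuity_1d_2d_pt_comp sqrt (fun u v => (1 + (Pf v + u * cf v)^2) / (Yf v + u * af v))); auto.
  apply continuity_pt_sqrt. fold y0 p0. apply Rlt_le, Rdiv_lt_0_compat; nra. }
split; auto.
unfold dF.
apply continuity_2d_pt_ext with (fun u v => (2*cf v*(Pf v+u*cf v)*(Yf v+u*af v) - af v*(1+(Pf v+u*cf v)*(Pf v+u*cf v))) * / ((2*((Yf v+u*af v)*(Yf v+u*af v)) * F (Yf v+u*af v) (Pf v+u*cf v)))).
{ intros; unfold Rdiv; f_equal; [ring|f_equal; ring]. }
apply continuity_2d_pt_mult.
- apply continuity_2d_pt_minus.
  + repeat apply continuity_2d_pt_mult; auto. apply continuity_2d_pt_const. apply c2v; auto.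
  + apply continuity_2d_pt_mult. apply c2v; auto. apply continuity_2d_pt_plus. apply continuity_2d_pt_const.
    apply continuity_2d_pt_mult; auto.
- apply continuity_2d_pt_inv.
  + apply continuity_2d_pt_mult; auto. apply continuity_2d_pt_mult. apply continuity_2d_pt_const.
    apply continuity_2d_pt_mult; auto.
  + fold y0 p0. pose proof (F_pos y0 p0 Hpos). apply Rgt_not_eq. apply Rmult_lt_0_compat; nra.
Qed.

Lemma cont_on_plus (D : R -> Prop) (f k : R -> R) : continuous_on D f -> (forall x, continuous k x) ->
  continuous_on D (fun x => f x + k x).
Proof.
intros Hf Hk x Hx.
apply (filterlim_comp_2 (G:=locally (f x)) (H:=locally (k x)) f k Rplus (Hf x Hx)).
- intros P HP. specialize (Hk x P HP). unfold filtermap, within. eapply filter_imp; [|exact Hk]. simpl. auto.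
- apply (filterlim_plus (f x) (k x)).
Qed.

Lemma gen_of_ev (f : R -> R) (Fa Fb : (R -> Prop) -> Prop) l : Filter Fa -> Filter Fb ->
  filter_prod Fa Fb (fun ab => is_RInt f (fst ab) (snd ab) l) -> is_RInt_gen f Fa Fb l.
Proof.
intros HFa HFb H P HP. unfold filtermapi.
apply (filter_imp (fun ab => is_RInt f (fst ab) (snd ab) l)); auto.
intros ab Hab. exists l. split; auto. apply locally_singleton; auto.
Qed.

Lemma c2_1d (f : R -> R -> R) u v : continuity_2d_pt f u v -> continuous (fun y => f u y) v.
Proof.
intros H. apply (proj1 (continuity_pt_filterlim _ _)).
intros eps Heps. destruct (H (mkposreal eps Heps)) as [d Hd].
exists d. split; [apply cond_pos|]. intros y [_ Hy]. simpl in *. unfold R_dist in *.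
apply Hd. rewrite Rminus_diag_eq, Rabs_R0 by auto. apply cond_pos. auto.
Qed.

Lemma c2_pos (f : R -> R -> R) u v : continuity_2d_pt f u v -> 0 < f u v -> locally_2d (fun a b => 0 < f a b) u v.
Proof.
intros H Hp. destruct (H (mkposreal _ Hp)) as [d Hd]. exists d. intros a c Ha Hc.
specialize (Hd a c Ha Hc). simpl in Hd. apply Rabs_lt_between in Hd. lra.
Qed.

Lemma cont_pt_of (f : R -> R) x : continuous f x -> continuity_pt f x.
Proof. intros H. apply (proj2 (continuity_pt_filterlim _ _)). exact H. Qed.

Lemma ball_R (x y : R) (e : posreal) : ball x e y <-> Rabs (y - x) < e.
Proof. unfold ball; simpl; unfold AbsRing_ball, abs, minus, plus, opp; simpl. tauto. Qed.

Definition MinH (b beta : R) (g dg : R -> R) (l : R) : Prop :=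
  0 < b /\ continuous_on (fun t => 0 <= t <= b) g /\
  (forall t, 0 < t < b -> is_derive g t (dg t)) /\
  filterlim (fun t => (g t - g b) / (t - b)) (at_left b) (locally (dg b)) /\
  continuous_on (fun t => 0 < t <= b) dg /\
  (forall t, 0 < t <= b -> 0 < g t) /\ g 0 = 0 /\ g b = beta /\
  L_is b g l /\ (forall h m, inX b beta h -> L_is b h m -> l <= m).

Lemma V (b beta : R) (g dg : R -> R) (l : R) (phi dphi : R -> R) (s0 t0 : R) : MinH b beta g dg l -> 0 < s0 -> s0 < t0 -> t0 < b ->
  (forall x, is_derive phi x (dphi x)) -> (forall x, continuous dphi x) ->
  (forall x, x <= s0 \/ t0 <= x -> phi x = 0 /\ dphi x = 0) ->
  RInt (fun x => dF (g x) (dg x) (phi x) (dphi x) 0) s0 t0 = 0.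
Proof.
intros HM Hs0 Hst Ht0 Hphi Hdphi Hsupp.
destruct HM as (Hb & Hgc & Hd & Hlb & Hdc & Hpos & Hg0 & Hgb & HL & Hmin).
assert (Hgcont : forall x, 0 < x < b -> continuous g x).
{ intros x Hx; apply (ex_derive_continuous g); exists (dg x); auto. }
assert (Hdgcont : forall x, 0 < x < b -> continuous dg x).
{ intros x Hx. apply continuous_continuous_on with (fun t => 0 < t <= b); auto.
  generalize (loc_open x b Hx); apply filter_imp; intros; lra. }
assert (Hphic : forall x, continuous phi x).
{ intros x; apply (ex_derive_continuous phi); exists (dphi x); auto. }
destruct (continuity_ab_min g s0 t0) as (xm & Hxm & Hxm'). lra.
{ intros c Hc; apply cont_pt_of, Hgcont; lra. }
set (m := g xm). assert (Hm : 0 < m) by (apply Hpos; lra).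
destruct (continuity_ab_maj (fun x => Rabs (phi x)) s0 t0) as (xM & HxM & HxM'). lra.
{ intros c Hc; apply cont_pt_of. apply (continuous_comp phi Rabs); [auto|apply continuous_Rabs]. }
set (Mp := Rabs (phi xM)).
assert (HMp : 0 <= Mp) by apply Rabs_pos.
set (e0 := m / (2 * (Mp + 1))).
assert (He0 : 0 < e0) by (apply Rdiv_lt_0_compat; lra).
assert (He0M : e0 * Mp < m / 2).
{ unfold e0. apply Rmult_lt_reg_r with (2 * (Mp+1)); [lra|]. field_simplify; [|lra]. nra. }
assert (Hposu : forall u v, Rabs u < e0 -> s0 <= v <= t0 -> m / 2 < g v + u * phi v).
{ intros u v Hu Hv. specialize (Hxm v Hv). specialize (HxM v Hv). simpl in HxM. fold Mp in HxM. fold m in Hxm.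
  assert (Rabs (u * phi v) <= Rabs u * Mp) by (rewrite Rabs_mult; apply Rmult_le_compat_l; [apply Rabs_pos|auto]).
  assert (Rabs u * Mp <= e0 * Mp) by (apply Rmult_le_compat_r; lra).
  pose proof (Rle_abs (- (u * phi v))). rewrite Rabs_Ropp in *. lra. }
set (f := fun u v => F (g v + u * phi v) (dg v + u * dphi v) - F (g v) (dg v)).
set (D := fun u => RInt (f u) s0 t0).
assert (Hfz : forall u v, v <= s0 \/ t0 <= v -> f u v = 0).
{ intros u v Hv. destruct (Hsupp v Hv) as [E1 E2]. unfold f. rewrite E1, E2, !Rmult_0_r, !Rplus_0_r. ring. }
assert (Hf0 : forall v, f 0 v = 0).
{ intros v. unfold f. rewrite !Rmult_0_l, !Rplus_0_r. ring. }
assert (Hc2 : forall u v, 0 < v < b -> 0 < g v + u * phi v ->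
   continuity_2d_pt (fun u v => F (g v + u*phi v) (dg v + u*dphi v)) u v /\
   continuity_2d_pt (fun u v => dF (g v) (dg v) (phi v) (dphi v) u) u v).
{ intros u v Hv Hp. apply c2_F; auto. }
assert (HcF0 : forall v, 0 < v < b -> continuous (fun v => F (g v) (dg v)) v).
{ intros v Hv. apply continuous_ext with (fun y => F (g y + 0 * phi y) (dg y + 0 * dphi y)).
  { intros y. rewrite !Rmult_0_l, !Rplus_0_r. auto. }
  apply (c2_1d (fun u v => F (g v + u*phi v) (dg v + u*dphi v))). apply Hc2; auto.
  rewrite Rmult_0_l, Rplus_0_r. apply Hpos; lra. }
assert (Hcf : forall u v, Rabs u < e0 -> s0 <= v <= t0 -> continuous (f u) v).
{ intros u v Hu Hv. unfold f.
  apply (continuous_minus (fun v => F (g v + u * phi v) (dg v + u * dphi v)) (fun v => F (g v) (dg v))).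
  - apply (c2_1d (fun u v => F (g v + u*phi v) (dg v + u*dphi v))). apply Hc2; [lra|].
    specialize (Hposu u v Hu Hv). lra.
  - apply HcF0; lra. }
assert (Hex : forall u, Rabs u < e0 -> ex_RInt (f u) s0 t0).
{ intros u Hu. apply (ex_RInt_continuous (V:=R_CompleteNormedModule)). intros z Hz. rewrite Rmin_left, Rmax_right in Hz by lra. auto. }
assert (HD : forall u, Rabs u < e0 -> 0 <= D u).
{ intros u Hu.
  set (h := fun x => g x + u * phi x).
  assert (Hhd : forall x, 0 < x < b -> is_derive h x (dg x + u * dphi x)).
  { intros x Hx. apply (is_derive_plus g (fun x => u * phi x)). apply Hd; auto.
    apply is_derive_scal. auto. }
  assert (HLh : L_is b h (l + D u)).
  { unfold L_is.
    assert (HA : is_RInt_gen (f u) (at_right 0) (at_point b) (D u)).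
    { apply gen_of_ev; try typeclasses eauto.
      apply Filter_prod with (fun a => 0 < a < s0) (fun y => y = b).
      - exists (mkposreal _ Hs0). intros a Ha Ha0. apply ball_R in Ha.
        assert (Ha1 : Rabs a < s0) by (rewrite <- (Rminus_0_r a); exact Ha). rewrite Rabs_right in Ha1 by lra. lra.
      - reflexivity.
      - intros a y Ha Hy; subst y; simpl.
        assert (I1 : is_RInt (f u) a s0 0).
        { apply is_RInt_ext with (fun _ => 0).
          { intros x Hx. rewrite Rmin_left, Rmax_right in Hx by lra. symmetry; apply Hfz; lra. }
          pose proof (is_RInt_const a s0 0) as H. change (is_RInt (fun _ => 0) a s0 (Rmult (s0 - a) 0)) in H. rewrite Rmult_0_r in H. exact H. }
        assert (I2 : is_RInt (f u) s0 t0 (D u)) by (apply (RInt_correct (V:=R_CompleteNormedModule)), Hex; auto).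
        assert (I3 : is_RInt (f u) t0 b 0).
        { apply is_RInt_ext with (fun _ => 0).
          { intros x Hx. rewrite Rmin_left, Rmax_right in Hx by lra. symmetry; apply Hfz; lra. }
          pose proof (is_RInt_const t0 b 0) as H. change (is_RInt (fun _ => 0) t0 b (Rmult (b - t0) 0)) in H. rewrite Rmult_0_r in H. exact H. }
        pose proof (is_RInt_Chasles _ _ _ _ _ _ (is_RInt_Chasles _ _ _ _ _ _ I1 I2) I3) as H.
        change (is_RInt (f u) a b (Rplus (Rplus 0 (D u)) 0)) in H. rewrite Rplus_0_l, Rplus_0_r in H. exact H. }
    pose proof (is_RInt_gen_plus _ _ _ _ HL HA) as HB.
    apply (is_RInt_gen_ext (fun y => plus (Lintegrand g y) (f u y))); [|exact HB].
    apply Filter_prod with (fun a => 0 < a < b) (fun y => y = b).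
    - exists (mkposreal _ Hb). intros a Ha Ha0. apply ball_R in Ha.
      assert (Ha1 : Rabs a < b) by (rewrite <- (Rminus_0_r a); exact Ha). rewrite Rabs_right in Ha1 by lra. lra.
    - reflexivity.
    - intros a y Ha Hy; subst y; simpl. intros x Hx. rewrite Rmin_left, Rmax_right in Hx by lra.
      unfold Lintegrand. rewrite (is_derive_unique g x (dg x)) by (apply Hd; lra).
      rewrite (is_derive_unique h x (dg x + u * dphi x)) by (apply Hhd; lra).
      change (sqrt ((1 + (dg x)^2) / g x)) with (F (g x) (dg x)).
      change (sqrt ((1 + (dg x + u * dphi x)^2) / h x)) with (F (h x) (dg x + u * dphi x)).
      unfold f, h. unfold plus; simpl. ring. }
  assert (HX : inX b beta h).
  { split.
    { apply cont_on_plus; auto. intros x. apply (continuous_scal (fun _ => u) phi).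
      apply continuous_const. auto. }
    split.
    { exists (fun x => dg x + u * dphi x). split; [auto|split].
      - destruct (Hsupp b (or_intror (Rlt_le _ _ Ht0))) as [Eb1 Eb2].
        rewrite Eb2, Rmult_0_r, Rplus_0_r.
        apply filterlim_ext_loc with (fun t => (g t - g b) / (t - b)); [|exact Hlb].
        assert (Hbt : 0 < b - t0) by lra.
        exists (mkposreal _ Hbt). intros t Ht Htb. apply ball_R in Ht.
        assert (Ht1 : Rabs (t - b) < b - t0) by exact Ht. rewrite Rabs_left in Ht1 by lra.
        destruct (Hsupp t (or_intror (Rlt_le t0 t ltac:(lra)))) as [Et1 Et2].
        unfold h. rewrite Et1, Eb1. f_equal. ring.
      - apply cont_on_plus; auto. intros x. apply (continuous_scal (fun _ => u) dphi).
        apply continuous_const. auto. }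
    split.
    { intros t Ht. unfold h.
      destruct (Rle_lt_dec s0 t); destruct (Rle_lt_dec t t0).
      - specialize (Hposu u t Hu ltac:(lra)). lra.
      - destruct (Hsupp t (or_intror (Rlt_le _ _ r0))) as [E1 _]. rewrite E1, Rmult_0_r, Rplus_0_r. auto.
      - destruct (Hsupp t (or_introl (Rlt_le _ _ r))) as [E1 _]. rewrite E1, Rmult_0_r, Rplus_0_r. auto.
      - lra. }
    split.
    { unfold h. destruct (Hsupp 0 (or_introl (Rlt_le _ _ Hs0))) as [E1 _]. rewrite E1, Hg0. ring. }
    split.
    { unfold h. destruct (Hsupp b (or_intror (Rlt_le _ _ Ht0))) as [E1 _]. rewrite E1, Hgb. ring. }
    exists (l + D u). exact HLh. }
  specialize (Hmin h (l + D u) HX HLh). lra. }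
assert (Hfd : forall u v, 0 < g v + u * phi v ->
   is_derive (fun z => f z v) u (dF (g v) (dg v) (phi v) (dphi v) u)).
{ intros u v Hp.
  pose proof (is_derive_minus _ _ u _ _ (F_deriv (g v) (dg v) (phi v) (dphi v) u Hp)
     (is_derive_const (F (g v) (dg v)) u)) as H.
  replace (dF (g v) (dg v) (phi v) (dphi v) u) with (minus (dF (g v) (dg v) (phi v) (dphi v) u) zero); [exact H|apply minus_zero_r]. }
assert (HDd : is_derive D 0 (RInt (fun v => dF (g v) (dg v) (phi v) (dphi v) 0) s0 t0)).
{ rewrite (RInt_ext (fun v => dF (g v) (dg v) (phi v) (dphi v) 0) (fun t => Derive (fun u => f u t) 0)).
  2:{ intros x Hx. rewrite Rmin_left, Rmax_right in Hx by lra. symmetry. apply is_derive_unique.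
      apply Hfd. specialize (Hposu 0 x ltac:(rewrite Rabs_R0; lra) ltac:(lra)). lra. }
  apply is_derive_RInt_param.
  - exists (mkposreal _ He0). intros y Hy t Ht. rewrite Rmin_left, Rmax_right in Ht by lra.
    apply ball_R in Hy. assert (Hy0 : Rabs y < e0) by (rewrite <- (Rminus_0_r y); exact Hy). clear Hy; rename Hy0 into Hy.
    exists (dF (g t) (dg t) (phi t) (dphi t) y). apply Hfd.
    specialize (Hposu y t Hy Ht). lra.
  - intros t Ht. rewrite Rmin_left, Rmax_right in Ht by lra.
    assert (Hgp : continuity_2d_pt (fun u v => g v + u * phi v) 0 t).
    { apply continuity_2d_pt_plus. apply c2v; apply Hgcont; lra.
      apply continuity_2d_pt_mult. apply continuity_2d_pt_id1. apply c2v; auto. }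
    assert (Hgt : 0 < g t + 0 * phi t) by (rewrite Rmult_0_l, Rplus_0_r; apply Hpos; lra).
    apply continuity_2d_pt_ext_loc with (fun u v => dF (g v) (dg v) (phi v) (dphi v) u).
    + destruct (c2_pos _ _ _ Hgp Hgt) as [d Hdd]. exists d. intros u v Hu Hv.
      symmetry. apply is_derive_unique. apply Hfd. apply Hdd; auto.
    + apply (Hc2 0 t); auto. lra.
  - exists (mkposreal _ He0). intros y Hy. apply ball_R in Hy. assert (Hy0 : Rabs y < e0) by (rewrite <- (Rminus_0_r y); exact Hy). clear Hy; rename Hy0 into Hy.
    apply Hex; auto. }
assert (HD0 : D 0 = 0).
{ unfold D. rewrite (RInt_ext _ (fun _ => 0)). rewrite RInt_const. apply Rmult_0_r.
  intros; apply Hf0. }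
assert (Hdp : derivable_pt D 0) by (apply ex_derive_Reals_0; eexists; exact HDd).
rewrite <- (derive_pt_eq_0 D 0 _ Hdp (proj1 (is_derive_Reals _ _ _) HDd)).
apply (deriv_minimum D (- e0) e0 0 Hdp); try lra.
intros x Hx1 Hx2. rewrite HD0. apply HD. apply Rabs_def1; lra.
Qed.

Lemma exR (f : R -> R) a b : (forall z, Rmin a b <= z <= Rmax a b -> continuous f z) -> ex_RInt f a b.
Proof. intros H. apply (ex_RInt_continuous (V:=R_CompleteNormedModule)). exact H. Qed.

Lemma RInt_minus_R (f k : R -> R) a b : ex_RInt f a b -> ex_RInt k a b ->
  RInt (fun x => f x - k x) a b = RInt f a b - RInt k a b.
Proof. intros H1 H2. exact (RInt_minus (V:=R_CompleteNormedModule) f k a b H1 H2). Qed.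

Lemma RInt_plus_R (f k : R -> R) a b : ex_RInt f a b -> ex_RInt k a b ->
  RInt (fun x => f x + k x) a b = RInt f a b + RInt k a b.
Proof. intros H1 H2. exact (RInt_plus (V:=R_CompleteNormedModule) f k a b H1 H2). Qed.

Lemma RInt_scal_R (f : R -> R) a b c : ex_RInt f a b ->
  RInt (fun x => c * f x) a b = c * RInt f a b.
Proof. intros H1. exact (RInt_scal (V:=R_CompleteNormedModule) f a b c H1). Qed.

Lemma RInt_Chasles_R (f : R -> R) a b c : ex_RInt f a b -> ex_RInt f b c ->
  RInt f a b + RInt f b c = RInt f a c.
Proof. intros H1 H2. exact (RInt_Chasles (V:=R_CompleteNormedModule) f a b c H1 H2). Qed.

Lemma RInt_zero_R (f : R -> R) a b : (forall x, Rmin a b < x < Rmax a b -> f x = 0) -> RInt f a b = 0.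
Proof.
intros H. rewrite (RInt_ext f (fun _ => 0)) by auto.
rewrite RInt_const. apply Rmult_0_r.
Qed.

Definition tent (d c x : R) := (d - Rabs (x - c) + Rabs (d - Rabs (x - c))) / 2.

Lemma lip_cont (f : R -> R) x : (forall x y, Rabs (f x - f y) <= Rabs (x - y)) -> continuous f x.
Proof.
intros H. apply (proj1 (continuity_pt_filterlim _ _)).
intros eps Heps. exists eps. split; auto. intros y [_ Hy]. simpl in *. unfold R_dist in *.
eapply Rle_lt_trans; [apply H|]. auto.
Qed.

Lemma tent_cont d c x : continuous (tent d c) x.
Proof.
apply lip_cont. intros u v. unfold tent.
assert (L1 : forall a b, Rabs ((a + Rabs a)/2 - (b + Rabs b)/2) <= Rabs (a - b)) by (intros; split_Rabs; lra).
assert (L2 : Rabs ((d - Rabs (u - c)) - (d - Rabs (v - c))) <= Rabs (u - v)).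
{ replace ((d - Rabs (u - c)) - (d - Rabs (v - c))) with (Rabs (v - c) - Rabs (u - c)) by ring.
  eapply Rle_trans; [apply Rabs_triang_inv2|]. replace (v - c - (u - c)) with (v - u) by ring.
  rewrite Rabs_minus_sym. lra. }
eapply Rle_trans; [apply L1|exact L2].
Qed.

Lemma tent_nonneg d c x : 0 <= tent d c x.
Proof. unfold tent. pose proof (Rle_abs (- (d - Rabs (x - c)))). rewrite Rabs_Ropp in H. lra. Qed.

Lemma tent_zero d c x : d <= Rabs (x - c) -> tent d c x = 0.
Proof. intros H. unfold tent. rewrite (Rabs_left1 (d - Rabs (x - c))) by lra. field. Qed.

Lemma tent_pos d c x : Rabs (x - c) < d -> 0 < tent d c x.
Proof. intros H. unfold tent. rewrite (Rabs_right (d - Rabs (x - c))) by lra. lra. Qed.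

Lemma tent_int_pos d c lo hi : 0 < d -> lo <= c - d -> c + d <= hi -> 0 < RInt (tent d c) lo hi.
Proof.
intros Hd H1 H2.
assert (Ex : forall a b, ex_RInt (tent d c) a b) by (intros; apply exR; intros; apply tent_cont).
rewrite <- (RInt_Chasles_R _ lo (c - d) hi) by auto.
rewrite <- (RInt_Chasles_R _ (c - d) (c + d) hi) by auto.
assert (0 <= RInt (tent d c) lo (c - d)) by (apply RInt_ge_0; auto; intros; apply tent_nonneg).
assert (0 <= RInt (tent d c) (c + d) hi) by (apply RInt_ge_0; auto; intros; apply tent_nonneg).
assert (0 < RInt (tent d c) (c - d) (c + d)).
{ apply RInt_gt_0; try lra. intros x Hx. apply tent_pos. apply Rabs_def1; lra.
  intros; apply tent_cont. }
lra.
Qed.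

Lemma tent_lower (H : R -> R) d c lo hi k : lo <= hi ->
  (forall x, lo <= x <= hi -> continuous H x) ->
  (forall x, Rabs (x - c) < d -> lo <= x <= hi -> k <= H x) ->
  k * RInt (tent d c) lo hi <= RInt (fun x => H x * tent d c x) lo hi.
Proof.
intros Hlh Hc Hk.
assert (E1 : ex_RInt (fun x => H x * tent d c x) lo hi).
{ apply exR. intros z Hz. rewrite Rmin_left, Rmax_right in Hz by lra.
  apply (continuous_mult H (tent d c)); auto. apply tent_cont. }
assert (E2 : ex_RInt (tent d c) lo hi) by (apply exR; intros; apply tent_cont).
assert (E3 : ex_RInt (fun x => k * tent d c x) lo hi).
{ apply exR. intros z Hz. apply (continuous_mult (fun _ => k) (tent d c)). apply continuous_const. apply tent_cont. }
rewrite <- RInt_scal_R by auto.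
assert (0 <= RInt (fun x => H x * tent d c x - k * tent d c x) lo hi).
{ apply RInt_ge_0; auto.
  - apply (ex_RInt_minus (V:=R_CompleteNormedModule) (fun x => H x * tent d c x) (fun x => k * tent d c x)); auto.
  - intros x Hx. destruct (Rlt_or_le (Rabs (x - c)) d) as [Hl|Hl].
    + specialize (Hk x Hl ltac:(lra)). pose proof (tent_nonneg d c x). nra.
    + rewrite tent_zero by auto. lra. }
rewrite RInt_minus_R in H0 by auto. lra.
Qed.

Lemma tent_upper (H : R -> R) d c lo hi k : lo <= hi ->
  (forall x, lo <= x <= hi -> continuous H x) ->
  (forall x, Rabs (x - c) < d -> lo <= x <= hi -> H x <= k) ->
  RInt (fun x => H x * tent d c x) lo hi <= k * RInt (tent d c) lo hi.
Proof.
intros Hlh Hc Hk.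
assert (L := tent_lower (fun x => - H x) d c lo hi (- k) Hlh). cbv beta in L.
assert (E1 : ex_RInt (fun x => H x * tent d c x) lo hi).
{ apply exR. intros z Hz. rewrite Rmin_left, Rmax_right in Hz by lra.
  apply (continuous_mult H (tent d c)); auto. apply tent_cont. }
assert (EE : RInt (fun x => - H x * tent d c x) lo hi = RInt (fun x => (-1) * (H x * tent d c x)) lo hi).
{ apply RInt_ext. intros x _. change (@eq R (- H x * tent d c x) (-1 * (H x * tent d c x))). ring. }
rewrite EE in L.
rewrite RInt_scal_R in L by auto.
assert (- k * RInt (tent d c) lo hi <= -1 * RInt (fun x => H x * tent d c x) lo hi); [|lra].
apply L.
- intros x Hx. apply (continuous_opp H). auto.
- intros x H1 H2. specialize (Hk x H1 H2). lra.
Qed.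

Lemma dF_lin Y P a c : 0 < Y -> dF Y P a c 0 = dF Y P 1 0 0 * a + dF Y P 0 1 0 * c.
Proof.
intros HY. unfold dF.
replace (Y + 0 * a) with Y by ring. replace (Y + 0 * 1) with Y by ring. replace (Y + 0 * 0) with Y by ring.
replace (P + 0 * c) with P by ring. replace (P + 0 * 1) with P by ring. replace (P + 0 * 0) with P by ring.
pose proof (F_pos Y P HY). field. lra.
Qed.

Lemma in_open_between (x0 y b : R) z : 0 < x0 < b -> 0 < y < b -> Rmin x0 y <= z <= Rmax x0 y -> 0 < z < b.
Proof.
intros H1 H2 H3. assert (0 < Rmin x0 y) by (apply Rmin_glb_lt; lra).
assert (Rmax x0 y < b) by (apply Rmax_lub_lt; lra). lra.
Qed.

Lemma DBR b beta g dg l : MinH b beta g dg l -> forall t, 0 < t < b ->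
  is_derive (fun x => dF (g x) (dg x) 0 1 0) t (dF (g t) (dg t) 1 0 0).
Proof.
intros HM.
pose proof HM as HM'. destruct HM' as (Hb & Hgc & Hd & _ & Hdc & Hpos & _).
assert (Hgcont : forall x, 0 < x < b -> continuous g x).
{ intros x Hx; apply (ex_derive_continuous g); exists (dg x); auto. }
assert (Hdgcont : forall x, 0 < x < b -> continuous dg x).
{ intros x Hx. apply continuous_continuous_on with (fun t => 0 < t <= b); auto.
  generalize (loc_open x b Hx); apply filter_imp; intros; lra. }
set (Af := fun x => dF (g x) (dg x) 1 0 0). set (Bf := fun x => dF (g x) (dg x) 0 1 0).
assert (HcA : forall x, 0 < x < b -> continuous Af x).
{ intros x Hx.
  assert (Hp : 0 < g x + 0 * (fun _ => 1) x) by (rewrite Rmult_0_l, Rplus_0_r; apply Hpos; lra).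
  pose proof (proj2 (c2_F g dg (fun _ => 1) (fun _ => 0) 0 x (Hgcont x Hx) (Hdgcont x Hx)
     (continuous_const _ _) (continuous_const _ _) Hp)) as H.
  exact (c2_1d _ 0 x H). }
assert (HcB : forall x, 0 < x < b -> continuous Bf x).
{ intros x Hx.
  assert (Hp : 0 < g x + 0 * (fun _ => 0) x) by (rewrite Rmult_0_l, Rplus_0_r; apply Hpos; lra).
  pose proof (proj2 (c2_F g dg (fun _ => 0) (fun _ => 1) 0 x (Hgcont x Hx) (Hdgcont x Hx)
     (continuous_const _ _) (continuous_const _ _) Hp)) as H.
  exact (c2_1d _ 0 x H). }
set (x0 := b / 2). assert (Hx0 : 0 < x0 < b) by (unfold x0; lra).
set (K := fun x => RInt Af x0 x).
assert (HK : forall x, 0 < x < b -> is_derive K x (Af x)).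
{ intros x Hx. apply (is_derive_RInt Af K x0 x).
  - generalize (loc_open x b Hx). apply filter_imp. intros y Hy.
    apply (RInt_correct (V:=R_CompleteNormedModule)). apply exR. intros z Hz. apply HcA.
    apply (in_open_between x0 y b); auto.
  - apply HcA; auto. }
assert (HcK : forall x, 0 < x < b -> continuous K x).
{ intros x Hx. apply (ex_derive_continuous K). exists (Af x). auto. }
set (Hf := fun x => Bf x - K x).
assert (HcH : forall x, 0 < x < b -> continuous Hf x).
{ intros x Hx. apply (continuous_minus Bf K); auto. }
assert (Key : forall x1 x2, 0 < x1 < b -> 0 < x2 < b -> Hf x1 <= Hf x2).
{ intros x1 x2 H1 H2. destruct (Rle_or_lt (Hf x1) (Hf x2)) as [|Hlt]; auto. exfalso.
  set (eta := (Hf x1 - Hf x2) / 3). assert (Heta : 0 < eta) by (unfold eta; lra).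
  pose proof (cont_pt_of _ _ (HcH x1 H1)) as C1. pose proof (cont_pt_of _ _ (HcH x2 H2)) as C2.
  unfold continuity_pt, continue_in, limit1_in, limit_in in C1, C2. simpl in C1, C2.
  destruct (C1 eta Heta) as (d1 & Hd1 & Hd1'). destruct (C2 eta Heta) as (d2 & Hd2 & Hd2').
  unfold R_dist in Hd1', Hd2'.
  set (del := Rmin (Rmin d1 d2) (Rmin (Rmin x1 (b - x1)) (Rmin x2 (b - x2))) / 2).
  assert (Hdel : 0 < del).
  { unfold del. assert (0 < Rmin (Rmin d1 d2) (Rmin (Rmin x1 (b - x1)) (Rmin x2 (b - x2)))); [|lra].
    repeat apply Rmin_glb_lt; lra. }
  assert (Hdel1 : del < d1 /\ del < d2 /\ del < x1 /\ del < b - x1 /\ del < x2 /\ del < b - x2).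
  { unfold del.
    pose proof (Rmin_l (Rmin d1 d2) (Rmin (Rmin x1 (b - x1)) (Rmin x2 (b - x2)))).
    pose proof (Rmin_r (Rmin d1 d2) (Rmin (Rmin x1 (b - x1)) (Rmin x2 (b - x2)))).
    pose proof (Rmin_l d1 d2). pose proof (Rmin_r d1 d2).
    pose proof (Rmin_l (Rmin x1 (b - x1)) (Rmin x2 (b - x2))). pose proof (Rmin_r (Rmin x1 (b - x1)) (Rmin x2 (b - x2))).
    pose proof (Rmin_l x1 (b - x1)). pose proof (Rmin_r x1 (b - x1)).
    pose proof (Rmin_l x2 (b - x2)). pose proof (Rmin_r x2 (b - x2)). lra. }
  set (lo := Rmin (x1 - del) (x2 - del)). set (hi := Rmax (x1 + del) (x2 + del)).
  assert (Hlo : 0 < lo /\ lo <= x1 - del /\ lo <= x2 - del).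
  { unfold lo. split; [apply Rmin_glb_lt; lra|split; [apply Rmin_l|apply Rmin_r]]. }
  assert (Hhi : hi < b /\ x1 + del <= hi /\ x2 + del <= hi).
  { unfold hi. split; [apply Rmax_lub_lt; lra|split; [apply Rmax_l|apply Rmax_r]]. }
  assert (Hlh : lo < hi) by lra.
  set (I1 := RInt (tent del x1) lo hi). set (I2 := RInt (tent del x2) lo hi).
  assert (HI1 : 0 < I1) by (apply tent_int_pos; lra).
  assert (HI2 : 0 < I2) by (apply tent_int_pos; lra).
  set (psi := fun x => / I1 * tent del x1 x - / I2 * tent del x2 x).
  assert (Hpsic : forall x, continuous psi x).
  { intros x. apply (continuous_minus (fun x => / I1 * tent del x1 x) (fun x => / I2 * tent del x2 x)).
    apply (continuous_mult (fun _ => / I1) (tent del x1)). apply continuous_const. apply tent_cont.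
    apply (continuous_mult (fun _ => / I2) (tent del x2)). apply continuous_const. apply tent_cont. }
  assert (Hpsi0 : forall x, x <= lo \/ hi <= x -> psi x = 0).
  { intros x Hx. unfold psi. rewrite !tent_zero. ring.
    all: destruct Hx; split_Rabs; lra. }
  assert (Hexpsi : forall a c, ex_RInt psi a c) by (intros; apply exR; intros; auto).
  set (phi := fun x => RInt psi lo x).
  assert (Hphid : forall x, is_derive phi x (psi x)).
  { intros x. apply (is_derive_RInt psi phi lo x); auto.
    apply filter_forall. intros y. apply (RInt_correct (V:=R_CompleteNormedModule)). auto. }
  assert (Hphisupp : forall x, x <= lo \/ hi <= x -> phi x = 0 /\ psi x = 0).
  { intros x Hx. split; [|auto]. unfold phi. destruct Hx as [Hx|Hx].
    - apply RInt_zero_R. intros y Hy. rewrite Rmin_right, Rmax_left in Hy by lra. apply Hpsi0; lra.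
    - rewrite <- (RInt_Chasles_R psi lo hi x) by auto.
      rewrite (RInt_zero_R psi hi x).
      2:{ intros y Hy. rewrite Rmin_left, Rmax_right in Hy by lra. apply Hpsi0; lra. }
      unfold psi. rewrite RInt_minus_R, !RInt_scal_R.
      + fold I1 I2. rewrite Rplus_0_r, Rinv_l, Rinv_l by lra. apply Rminus_diag_eq. reflexivity.
      + apply exR; intros; apply tent_cont.
      + apply exR; intros; apply tent_cont.
      + apply exR; intros. apply (continuous_mult (fun _ => / I1) (tent del x1)). apply continuous_const. apply tent_cont.
      + apply exR; intros. apply (continuous_mult (fun _ => / I2) (tent del x2)). apply continuous_const. apply tent_cont. }
  assert (HV := V b beta g dg l phi psi lo hi HM ltac:(lra) Hlh ltac:(lra) Hphid Hpsic Hphisupp).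
  assert (Hrange : forall x, lo <= x <= hi -> 0 < x < b) by (intros; lra).
  assert (Hphic : forall x, continuous phi x).
  { intros x. apply (ex_derive_continuous phi). exists (psi x). auto. }
  assert (HV' : RInt (fun x => Af x * phi x + Bf x * psi x) lo hi = 0).
  { rewrite <- HV. apply RInt_ext. intros x Hx. rewrite Rmin_left, Rmax_right in Hx by lra.
    symmetry. apply dF_lin. apply Hpos; lra. }
  assert (HIBP : RInt (fun x => Af x * phi x + K x * psi x) lo hi = 0).
  { assert (D1 : forall x, Rmin lo hi <= x <= Rmax lo hi ->
       is_derive (fun x => K x * phi x) x (Af x * phi x + K x * psi x)).
    { intros x Hx. rewrite Rmin_left, Rmax_right in Hx by lra.
      exact (is_derive_mult K phi x _ _ (HK x (Hrange x Hx)) (Hphid x) Rmult_comm). }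
    assert (D2 : forall x, Rmin lo hi <= x <= Rmax lo hi ->
       continuous (fun x => Af x * phi x + K x * psi x) x).
    { intros x Hx. rewrite Rmin_left, Rmax_right in Hx by lra.
      apply (continuous_plus (fun x => Af x * phi x) (fun x => K x * psi x)).
      apply (continuous_mult Af phi); auto.
      apply (continuous_mult K psi); auto. }
    pose proof (is_RInt_derive (V:=R_CompleteNormedModule) _ _ lo hi D1 D2) as H.
    apply is_RInt_unique in H. rewrite H.
    destruct (Hphisupp lo (or_introl (Rle_refl _))) as [E1 _].
    destruct (Hphisupp hi (or_intror (Rle_refl _))) as [E2 _].
    change (Rminus (K hi * phi hi) (K lo * phi lo) = 0). rewrite E1, E2. ring. }
  assert (Ex1 : forall F1 : R -> R, (forall x, 0 < x < b -> continuous F1 x) -> ex_RInt F1 lo hi).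
  { intros F1 HF. apply exR. intros z Hz. rewrite Rmin_left, Rmax_right in Hz by lra. apply HF. lra. }
  assert (HHpsi : RInt (fun x => Hf x * psi x) lo hi = 0).
  { rewrite (RInt_ext _ (fun x => (Af x * phi x + Bf x * psi x) - (Af x * phi x + K x * psi x))).
    - rewrite RInt_minus_R, HV', HIBP. apply Rminus_0_r.
      + apply Ex1. intros x Hx. apply (continuous_plus (fun x => Af x * phi x) (fun x => Bf x * psi x)).
        apply (continuous_mult Af phi); auto. apply (continuous_mult Bf psi); auto.
      + apply Ex1. intros x Hx. apply (continuous_plus (fun x => Af x * phi x) (fun x => K x * psi x)).
        apply (continuous_mult Af phi); auto. apply (continuous_mult K psi); auto.
    - intros x _. unfold Hf. change (@eq R (( Bf x - K x) * psi x) ((Af x * phi x + Bf x * psi x) - (Af x * phi x + K x * psi x))). ring. }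
  assert (ExT : forall c, ex_RInt (fun x => Hf x * tent del c x) lo hi).
  { intros c. apply Ex1. intros x Hx. apply (continuous_mult Hf (tent del c)); auto. apply tent_cont. }
  assert (HT : RInt (fun x => Hf x * psi x) lo hi =
      / I1 * RInt (fun x => Hf x * tent del x1 x) lo hi - / I2 * RInt (fun x => Hf x * tent del x2 x) lo hi).
  { rewrite <- !RInt_scal_R by auto. rewrite <- RInt_minus_R.
    - apply RInt_ext. intros x _. unfold psi.
      change (@eq R (Hf x * (/ I1 * tent del x1 x - / I2 * tent del x2 x)) (/ I1 * (Hf x * tent del x1 x) - / I2 * (Hf x * tent del x2 x))). ring.
    - apply Ex1. intros x Hx. apply (continuous_mult (fun _ => / I1) (fun x => Hf x * tent del x1 x)).
      apply continuous_const. apply (continuous_mult Hf (tent del x1)); auto. apply tent_cont.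
    - apply Ex1. intros x Hx. apply (continuous_mult (fun _ => / I2) (fun x => Hf x * tent del x2 x)).
      apply continuous_const. apply (continuous_mult Hf (tent del x2)); auto. apply tent_cont. }
  assert (L1 : (Hf x1 - eta) * I1 <= RInt (fun x => Hf x * tent del x1 x) lo hi).
  { apply tent_lower; try lra. intros x Hx; apply HcH; lra.
    intros x Hx Hx'. destruct (Req_dec x x1) as [->|Hne]; [lra|].
    assert (Rabs (Hf x - Hf x1) < eta).
    { apply Hd1'. split; [|lra]. split; [exact I|]. intro E; apply Hne; auto. }
    apply Rabs_lt_between in H. lra. }
  assert (L2 : RInt (fun x => Hf x * tent del x2 x) lo hi <= (Hf x2 + eta) * I2).
  { apply tent_upper; try lra. intros x Hx; apply HcH; lra.
    intros x Hx Hx'. destruct (Req_dec x x2) as [->|Hne]; [lra|].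
    assert (Rabs (Hf x - Hf x2) < eta).
    { apply Hd2'. split; [|lra]. split; [exact I|]. intro E; apply Hne; auto. }
    apply Rabs_lt_between in H. lra. }
  set (R1 := RInt (fun x => Hf x * tent del x1 x) lo hi) in *.
  set (R2 := RInt (fun x => Hf x * tent del x2 x) lo hi) in *.
  assert (Q1 : Hf x1 - eta <= / I1 * R1).
  { apply Rmult_le_reg_r with I1; auto. rewrite (Rmult_comm (/ I1 * R1) I1), <- Rmult_assoc, Rinv_r, Rmult_1_l by lra. lra. }
  assert (Q2 : / I2 * R2 <= Hf x2 + eta).
  { apply Rmult_le_reg_r with I2; auto. rewrite (Rmult_comm (/ I2 * R2) I2), <- Rmult_assoc, Rinv_r, Rmult_1_l by lra. lra. }
  rewrite HHpsi in HT. unfold eta in *. lra. }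
assert (Hconst : forall x, 0 < x < b -> Bf x = K x + Hf x0).
{ intros x Hx. assert (Hf x = Hf x0) by (apply Rle_antisym; apply Key; auto). unfold Hf in *. lra. }
intros t Ht.
apply is_derive_ext_loc with (fun x => K x + Hf x0).
- generalize (loc_open t b Ht). apply filter_imp. intros x Hx. symmetry. apply Hconst; auto.
- pose proof (is_derive_plus K (fun _ => Hf x0) t _ _ (HK t Ht) (is_derive_const (Hf x0) t)) as H.
  replace (dF (g t) (dg t) 1 0 0) with (plus (Af t) zero); [exact H|apply plus_zero_r].
Qed.

Theorem proposition3 (b beta : R) (g : R -> R) :
  0 < b -> 0 < beta -> is_minimizer b beta g ->
  (* (a) *)
  filterlim (Derive g) (at_right 0) (Rbar_locally p_infty) /\
  (* (b) *)
  (forall a c, 0 <= a -> a < c -> c <= b ->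
     ~ (forall t, a <= t <= c -> g t = g a)) /\
  (* (c) *)
  (forall t1 t2, 0 < t1 < b -> 0 < t2 < b ->
     Derive g t1 = 0 -> Derive g t2 = 0 -> t1 = t2) /\
  (forall t, 0 < t < b -> Derive g t = 0 ->
     forall s, 0 <= s <= b -> g s <= g t) /\
  (* (d) *)
  (strictly_increasing_on 0 b g \/
   exists m, 0 < m < b /\ strictly_increasing_on 0 m g /\
             strictly_decreasing_on m b g) /\
  (* (e) *)
  (forall s t, 0 < s -> s < t -> t < b -> Derive g t < Derive g s).
Proof.
intros Hb Hbeta Hmin.
destruct Hmin as [HX [l [HL Hmin']]].
pose proof HX as HX'.
destruct HX' as (Hgc & [dg (Hd & Hlb & Hdc)] & Hpos & Hg0 & Hgb & _).
assert (HM : MinH b beta g dg l).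
{ unfold MinH. repeat (split; auto). }
assert (HP : P2hyp b g dg).
{ unfold P2hyp. split; auto. split; auto. split; auto. split; auto. split; auto. split.
  - intros x Hx. apply continuous_continuous_on with (fun t => 0 < t <= b); auto.
    generalize (loc_open x b Hx); apply filter_imp; intros; lra.
  - apply (DBR b beta g dg l HM). }
exact (partII b g dg HP).
Qed.
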